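(* Let $T$ be a c.n.u. contraction on $H$. For $a\in A_T^{\perp_s}$ write $a=(x_0,Tx_0)+(a_+,0)+(0,a_-)$ with $x_0\in\mathbb{K}$, $a_+\in\mathbb{K}^\perp$, $a_-\in\mathbb{K}_*^\perp$ (this decomposition exists and is unique since $A_T^{\perp_s}=A_T\oplus_\perp Q\oplus_\perp Q_*$), and set $\Gamma_+a=a_+$, $\Gamma_-a=a_-$. Then $(\mathbb{K}^\perp,\mathbb{K}_*^\perp,\Gamma_+,\Gamma_-)$ is a boundary quadruple for $A_T^{\perp_s}$.
   Context: $H$ is an infinite-dimensional separable complex Hilbert space. A c.n.u. contraction is $T\in\mathbb{B}(H)$ with $\|T\|\le1$ having no nonzero invariant subspace on which it is unitary. $\mathbb{K}=\ker(I-T^*T)$, $\mathbb{K}_*=\ker(I-TT^* )$. $\mathbb{H}=H\oplus_\perp H$ carries the strong symplectic structure $[(x_1,x_2),(y_1,y_2)]=i(x_1,y_1)_H-i(x_2,y_2)_H$; $S^{\perp_s}=\{a:[a,b]=0\ \forall b\in S\}$. $A_T=\{(x,Tx):x\in\mathbb{K}\}$, $Q=\{(x,0):x\in\mathbb{K}^\perp\}$, $Q_*=\{(0,x):x\in\mathbb{K}_*^\perp\}$. For an isotropic closed subspace $A\subseteq\mathbb{H}$ (i.e. $[a,b]=0$ for $a,b\in A$), a boundary quadruple for $A^{\perp_s}$ is $(H_+,H_-,\Gamma_+,\Gamma_-)$ where $H_\pm$ are Hilbert spaces and $\Gamma_\pm:A^{\perp_s}\to H_\pm$ are linear maps such that $(\Gamma_+,\Gamma_-):A^{\perp_s}\to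 H_+\oplus_\perp H_-$ is bounded, surjective, has kernel exactly $A$, and the abstract Green formula $[a,b]=i(\Gamma_+a,\Gamma_+b)_{H_+}-i(\Gamma_-a,\Gamma_-b)_{H_-}$ holds for all $a,b\in A^{\perp_s}$ (equivalently, $(\Gamma_+,\Gamma_-)$ induces a symplectic topological isomorphism of $A^{\perp_s}/A$ onto $H_+\oplus_\perp H_-$ with the standard structure $i(\cdot,\cdot)_{H_+}-i(\cdot,\cdot)_{H_-}$). *)

(* Defs.v *)
From mathcomp Require Import all_boot all_algebra.
From mathcomp Require Import reals complex.
Set Implicit Arguments. Unset Strict Implicit. Unset Printing Implicit Defensive.
Import GRing.Theory Num.Theory.
Local Open Scope ring_scope.
Local Open Scope complex_scope.

Section Hilbert.
Variables (R : realType) (V : lmodType R[i]) (inner : V -> V -> R[i]).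

Definition norm2 (x : V) : R := complex.Re (inner x x).

Definition is_inner_product : Prop :=
  [/\ (forall (a : R[i]) (x y z : V), inner (a *: x + y) z = a * inner x z + inner y z),
      (forall x y : V, inner x y = (inner y x)^*),
      (forall x : V, 0 <= inner x x) &
      (forall x : V, inner x x = 0 -> x = 0)].

Definition cauchy_seq (u : nat -> V) : Prop :=
  forall e : R, 0 < e -> exists N : nat,
    forall m n : nat, (N <= m)%N -> (N <= n)%N -> norm2 (u m - u n) < e.

Definition seq_converges_to (u : nat -> V) (l : V) : Prop :=
  forall e : R, 0 < e -> exists N : nat, forall n : nat, (N <= n)%N -> norm2 (u n - l) < e.

Definition complete : Prop :=
  forall u : nat -> V, cauchy_seq u -> exists l : V, seq_converges_to u l.

Definition separable : Prop :=
  exists d : nat -> V, forall (x : V) (e : R), 0 < e -> exists n : nat, norm2 (x - d n) < e.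

Definition infinite_dimensional : Prop :=
  forall n : nat, exists u : nat -> V,
    forall c : nat -> R[i], \sum_(k < n) c k *: u k = 0 -> forall k : nat, (k < n)%N -> c k = 0.

Definition is_inf_dim_sep_hilbert : Prop :=
  [/\ is_inner_product, complete, separable & infinite_dimensional].

Definition is_linear_op (T : V -> V) : Prop :=
  forall (a : R[i]) (x y : V), T (a *: x + y) = a *: T x + T y.

Definition is_contraction (T : V -> V) : Prop :=
  is_linear_op T /\ forall x : V, norm2 (T x) <= norm2 x.

Definition is_adjoint (T Tstar : V -> V) : Prop :=
  forall x y : V, inner (T x) y = inner x (Tstar y).

Definition closed_subspace (M : V -> Prop) : Prop :=
  [/\ M 0,
      (forall (a : R[i]) (x y : V), M x -> M y -> M (a *: x + y)) &
      (forall (u : nat -> V) (l : V), (forall n, M (u n)) -> seq_converges_to u l -> M l)].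

Definition unitary_on (T : V -> V) (M : V -> Prop) : Prop :=
  [/\ (forall x, M x -> M (T x)),
      (forall x, M x -> norm2 (T x) = norm2 x) &
      (forall y, M y -> exists2 x, M x & T x = y)].

Definition cnu_contraction (T : V -> V) : Prop :=
  is_contraction T /\
  forall M : V -> Prop, closed_subspace M -> unitary_on T M -> forall x, M x -> x = 0.

Definition orth (S : V -> Prop) : V -> Prop :=
  fun x => forall y, S y -> inner x y = 0.

Definition defect_K (T Tstar : V -> V) : V -> Prop := fun x => x - Tstar (T x) = 0.
Definition defect_Kstar (T Tstar : V -> V) : V -> Prop := fun x => x - T (Tstar x) = 0.

Definition sympl (a b : V * V) : R[i] :=
  'i * inner a.1 b.1 - 'i * inner a.2 b.2.

Definition sympl_orth (S : V * V -> Prop) : V * V -> Prop :=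
  fun a => forall b, S b -> sympl a b = 0.

Definition norm2_pair (a : V * V) : R := norm2 a.1 + norm2 a.2.

Definition A_T (T Tstar : V -> V) : V * V -> Prop :=
  fun a => exists2 x, defect_K T Tstar x & a = (x, T x).

(* Boundary quadruple (Hp, Hm, Gp, Gm) for A^{perp_s}, where Hp, Hm are closed
   subspaces of H carrying the inner product of H. *)
Definition boundary_quadruple (A : V * V -> Prop) (Hp Hm : V -> Prop)
    (Gp Gm : V * V -> V) : Prop :=
  (forall a, sympl_orth A a -> Hp (Gp a) /\ Hm (Gm a)) /\
  [/\ 
      (forall (c : R[i]) (a b : V * V), sympl_orth A a -> sympl_orth A b ->
         Gp (c *: a.1 + b.1, c *: a.2 + b.2) = c *: Gp a + Gp b /\
         Gm (c *: a.1 + b.1, c *: a.2 + b.2) = c *: Gm a + Gm b),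
      (exists C : R, forall a, sympl_orth A a ->
         norm2 (Gp a) + norm2 (Gm a) <= C * norm2_pair a),
      (forall u v, Hp u -> Hm v -> exists a, [/\ sympl_orth A a, Gp a = u & Gm a = v]),
      (forall a, (sympl_orth A a /\ Gp a = 0 /\ Gm a = 0) <-> A a) &
      (forall a b, sympl_orth A a -> sympl_orth A b ->
         sympl a b = 'i * inner (Gp a) (Gp b) - 'i * inner (Gm a) (Gm b))].

End Hilbert.

(* Main.v *)
Require Import Defs.
From mathcomp Require Import all_boot all_order all_algebra.
From mathcomp Require Import reals complex classical_sets boolp.
From mathcomp Require Import ring lra zify.
Import Order.TTheory GRing.Theory Num.Theory.
Local Open Scope ring_scope.
Local Open Scope complex_scope.

Set Implicit Arguments. Unset Strict Implicit.



Section IP.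
Variables (R : realType) (V : lmodType R[i]) (inner : V -> V -> R[i]).
Hypothesis ip : is_inner_product inner.
Local Notation Re := complex.Re.
Local Notation Im := complex.Im.
Local Notation n2 := (norm2 inner).
Ltac gen_inner :=
  repeat match goal with |- context [inner ?u ?v] =>
    let c := fresh "c" in let c1 := fresh "c" in let c2 := fresh "c" in
    move: (inner u v) => c; case: c => c1 c2 end.

Lemma ip_lin a x y z : inner (a *: x + y) z = a * inner x z + inner y z.
Proof. by case: ip => h _ _ _; apply: h. Qed.
Lemma ip_sym x y : inner x y = conjc (inner y x).
Proof. by case: ip => _ h _ _; apply: h. Qed.
Lemma ip_pos x : 0 <= inner x x.
Proof. by case: ip => _ _ h _; apply: h. Qed.
Lemma ip_def x : inner x x = 0 -> x = 0.
Proof. by case: ip => _ _ _ h; apply: h. Qed.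

Lemma inner0l z : inner 0 z = 0.
Proof.
have := ip_lin 1 0 0 z; rewrite scaler0 addr0 mul1r => /eqP.
by rewrite -subr_eq0 opprD addrA subrr sub0r oppr_eq0 => /eqP.
Qed.
Lemma innerDl x y z : inner (x + y) z = inner x z + inner y z.
Proof. by rewrite -[x in LHS]scale1r ip_lin mul1r. Qed.
Lemma innerZl a x z : inner (a *: x) z = a * inner x z.
Proof. by rewrite -[_ *: _]addr0 ip_lin inner0l addr0. Qed.
Lemma innerNl x z : inner (- x) z = - inner x z.
Proof. by rewrite -scaleN1r innerZl mulN1r. Qed.
Lemma innerBl x y z : inner (x - y) z = inner x z - inner y z.
Proof. by rewrite innerDl innerNl. Qed.
Lemma inner0r z : inner z 0 = 0.
Proof. by rewrite ip_sym inner0l /= !oppr0. Qed.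
Lemma innerDr x y z : inner z (x + y) = inner z x + inner z y.
Proof.
rewrite ip_sym innerDl [inner z x]ip_sym [inner z y]ip_sym.
by gen_inner; rewrite /= opprD.
Qed.
Lemma innerZr a x z : inner z (a *: x) = conjc a * inner z x.
Proof.
rewrite ip_sym innerZl [inner z x]ip_sym.
gen_inner; case: a => a1 a2; apply/eqP; rewrite eq_complex /=; apply/andP; split; apply/eqP; lra.
Qed.
Lemma innerNr x z : inner z (- x) = - inner z x.
Proof. by rewrite ip_sym innerNl [inner z x]ip_sym; gen_inner. Qed.
Lemma innerBr x y z : inner z (x - y) = inner z x - inner z y.
Proof. by rewrite innerDr innerNr. Qed.

Lemma inner_self x : inner x x = (n2 x)%:C.
Proof. have := ger0_Im (ip_pos x); rewrite /norm2; case: (inner x x) => a b /= -> //. Qed.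
Lemma norm2_ge0 x : 0 <= n2 x.
Proof. by have := ip_pos x; rewrite inner_self lecR. Qed.
Lemma norm2_eq0 x : n2 x = 0 -> x = 0.
Proof. by move=> h; apply: ip_def; rewrite inner_self h. Qed.
Lemma ReJs x y : Re (inner y x) = Re (inner x y).
Proof. by rewrite [inner y x]ip_sym; gen_inner. Qed.
Lemma norm2D x y : n2 (x + y) = n2 x + n2 y + 2 * Re (inner x y).
Proof.
rewrite /norm2 innerDl !innerDr; move: (ReJs x y); gen_inner => /=; lra.
Qed.
Lemma norm2N x : n2 (- x) = n2 x.
Proof. by rewrite /norm2 innerNl innerNr opprK. Qed.
Lemma norm2B x y : n2 (x - y) = n2 x + n2 y - 2 * Re (inner x y).
Proof. rewrite norm2D norm2N innerNr; gen_inner => /=; lra. Qed.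
Lemma norm2Z a x : n2 (a *: x) = (Re a ^+ 2 + Im a ^+ 2) * n2 x.
Proof.
rewrite /norm2 innerZl innerZr inner_self; case: a => a1 a2 /=; lra.
Qed.
Lemma ReinnerZr (t : R) x y : Re (inner x (t%:C *: y)) = t * Re (inner x y).
Proof. by rewrite innerZr; gen_inner => /=; lra. Qed.
Lemma ReinnerZl (t : R) x y : Re (inner (t%:C *: x) y) = t * Re (inner x y).
Proof. by rewrite innerZl; gen_inner => /=; lra. Qed.

Lemma reCS x y : Re (inner x y) ^+ 2 <= n2 x * n2 y.
Proof.
set b := Re (inner x y); set A := n2 x; set C := n2 y.
have key : forall t : R, 0 <= A - 2 * t * b + t ^+ 2 * C.
  move=> t; have := norm2_ge0 (x - t%:C *: y).
  by rewrite norm2B norm2Z ReinnerZr /= -/b -/A -/C; lra.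
have hA := norm2_ge0 x; have hC := norm2_ge0 y.
have [C0|Cpos] := eqVneq C 0.
  rewrite C0 mulr0.
  have [b0|bn0] := eqVneq b 0; first by rewrite b0; lra.
  have h1 := key ((A + 1) / (2 * b)).
  rewrite C0 mulr0 addr0 in h1.
  have : 2 * ((A + 1) / (2 * b)) * b = A + 1.
    by field; rewrite bn0.
  lra.
have Cp : 0 < C by rewrite lt0r Cpos hC.
have := key (b / C).
have -> : A - 2 * (b / C) * b + (b / C) ^+ 2 * C = A - b ^+ 2 / C.
  by field; rewrite Cpos.
rewrite subr_ge0 ler_pdivrMr //; lra.
Qed.
End IP.

Unset Implicit Arguments.


Definition einv (R : realType) (n : nat) : R := (n.+1%:R)^-1.
Lemma einv_le (R : realType) (N n : nat) : (N <= n)%N -> einv R n <= einv R N.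
Proof. by move=> h; rewrite /einv lef_pV2 ?posrE ?ltr0Sn // ler_nat ltnS. Qed.
Arguments einv_le R {N n}.
Lemma einv_gt0 (R : realType) (n : nat) : 0 < einv R n.
Proof. by rewrite /einv invr_gt0 ltr0Sn. Qed.
Lemma einv_le1 (R : realType) (n : nat) : einv R n <= 1.
Proof. by rewrite /einv invf_le1 ?ltr0Sn // ler1n. Qed.
Lemma einv_small (R : realType) (e : R) : 0 < e -> exists N : nat, einv R N < e.
Proof. by move=> /ltr_add_invr [k hk]; exists k; rewrite add0r in hk. Qed.

Lemma c2E (R : realType) : ((2:R)%:C : R[i]) = 1 + 1.
Proof. by apply/eqP; rewrite eq_complex /= addr0 !eqxx. Qed.
Lemma c2inv (R : realType) : ((2:R)%:C : R[i]) * (2^-1 : R)%:C = 1.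
Proof. apply/eqP; rewrite eq_complex /= !mulr0 !mul0r subr0 addr0 eqxx andbT; by apply/eqP; rewrite divff // pnatr_eq0. Qed.

Section P.
Local Open Scope classical_set_scope.
Variables (R : realType) (V : lmodType R[i]) (inner : V -> V -> R[i]).
Hypothesis ip : is_inner_product inner.
Hypothesis compl : complete inner.
Local Notation Re := complex.Re.
Local Notation Im := complex.Im.
Local Notation n2 := (norm2 inner).

Lemma re_lim (u : nat -> V) l v : (forall n, Re (inner (u n) v) = 0) ->
  seq_converges_to inner u l -> Re (inner l v) = 0.
Proof.
move=> hu hc.
have key : forall n, Re (inner l v) ^+ 2 <= n2 (u n - l) * n2 v.
  move=> n; have := reCS ip (l - u n) v.
  rewrite innerBl // -(norm2N ip) opprB.
  have -> : Re (inner l v - inner (u n) v) = Re (inner l v) - Re (inner (u n) v).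
    by move: (inner l v) (inner (u n) v) => [? ?] [? ?] /=.
  by rewrite hu subr0.
move: key; set r := Re (inner l v); set W := n2 v => key.
have hW : 0 <= W := norm2_ge0 ip v.
have [r0|rn0] := eqVneq r 0; first by [].
have r2 : 0 < r ^+ 2 by rewrite lt0r sqrf_eq0 rn0 sqr_ge0.
have ep : 0 < r ^+ 2 / (W + 1) by rewrite divr_gt0 //; lra.
have [N hN] := hc _ ep.
have := key N; have := hN N (leqnn N).
have := norm2_ge0 ip (u N - l).
have : r ^+ 2 / (W + 1) * (W + 1) = r ^+ 2 by field; lra.
move: (r ^+ 2 / (W + 1)) => e. nra.
Qed.
Lemma orth_lim (u : nat -> V) l v : (forall n, inner (u n) v = 0) ->
  seq_converges_to inner u l -> inner l v = 0.
Proof.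
move=> hu hc.
have h1 : Re (inner l v) = 0 by by apply: (@re_lim u l v _ hc) => n; rewrite hu.
have h2 : Re (inner l ('i *: v)) = 0.
  by apply: (@re_lim u l _ _ hc) => n; rewrite innerZr // hu mulr0.
move: h1 h2; rewrite innerZr //; case: (inner l v) => a b /= -> .
move=> h; have -> : b = 0 by lra.
by [].
Qed.

Lemma projection (M : V -> Prop) : M 0 ->
  (forall (c : R[i]) x y, M x -> M y -> M (c *: x + y)) ->
  (forall u l, (forall n, M (u n)) -> seq_converges_to inner u l -> M l) ->
  forall a, exists y, M y /\ forall m, M m -> inner (a - y) m = 0.
Proof.
move=> M0 Mlin Mcl a.
pose S : set R := fun r : R => exists2 y, M y & r = n2 (a - y).
have Sne : S !=set0 by exists (n2 (a - 0)); exists 0.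
have Slb : has_lbound S by exists 0 => r [y _ ->]; exact: norm2_ge0.
have Sinf : has_inf S by split.
set d := inf S.
have hd : forall y, M y -> d <= n2 (a - y).
  by move=> y My; apply: (ge_inf Slb); exists y.
have d0 : 0 <= d by apply: lb_le_inf => // r [y _ ->]; exact: norm2_ge0.
have hex : forall n : nat, exists y, M y /\ n2 (a - y) < d + einv R n.
  move=> n; have [e [y My ->] he] := inf_adherent (einv_gt0 R n) Sinf.
  by exists y.
have [ys hys] := choice hex.
have cauchy_bd : forall m n, n2 (ys m - ys n) <= 2 * einv R m + 2 * einv R n.
  move=> m n.
  have [Mm hm] := hys m; have [Mn hn] := hys n.
  pose w := (2^-1 : R)%:C *: (ys m + ys n).
  have Mw : M w by rewrite /w -[_ *: _]addr0; apply: (Mlin) => //; rewrite -[ys m]scale1r; apply: (Mlin).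
  have hw := hd w Mw.
  have e1 : (a - ys n) + (a - ys m) = (2:R)%:C *: (a - w).
    by rewrite scalerBr /w scalerA c2inv scale1r c2E scalerDl scale1r opprD addrACA [- ys n + _]addrC.
  have e2 : (a - ys n) - (a - ys m) = ys m - ys n by rewrite opprB [X in X = _]addrC addrA subrK.
  have := norm2D ip (a - ys n) (a - ys m); have := norm2B ip (a - ys n) (a - ys m).
  rewrite e1 e2 norm2Z //= !expr2 mul0r addr0 => hB hD.
  have := norm2_ge0 ip (a - w).
  have hD2 : 4 * n2 (a - w) = n2 (a - ys n) + n2 (a - ys m) + 2 * Re (inner (a - ys n) (a - ys m)).
    rewrite -hD; ring.
  lra.
have hc : cauchy_seq inner ys.
  move=> e e0; have [N hN] := einv_small R (e / 4) ltac:(lra).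
  exists N => m n hm hn; have := cauchy_bd m n.
  have := einv_le R hm; have := einv_le R hn; lra.
have [y hy] := compl _ hc.
have My : M y by apply: (Mcl ys) => // n; case: (hys n).
have hmin : n2 (a - y) <= d.
  case: (leP (n2 (a - y)) d) => // hlt; exfalso.
  set g := n2 (a - y) - d.
  have g0 : 0 < g by rewrite /g; lra.
  set e2 := g ^+ 2 / (36 * (d + 1)).
  have e2p : 0 < e2 by rewrite /e2 divr_gt0 ?exprn_gt0 //; lra.
  have e2e : e2 * (36 * (d + 1)) = g ^+ 2 by rewrite /e2; field; lra.
  have [N1 hN1] := hy (g / 3) ltac:(lra).
  have [N2 hN2] := hy e2 e2p.
  have [N3 hN3] := einv_small R (g / 3) ltac:(lra).
  pose n := (N1 + N2 + N3)%N.
  have h1 := hN1 n ltac:(rewrite /n; lia).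
  have h2 := hN2 n ltac:(rewrite /n; lia).
  have h3 := einv_le R (ltac:(rewrite /n; lia) : (N3 <= n)%N).
  have h4 := einv_le1 R n.
  have [_ hA] := hys n.
  have eD : a - y = (a - ys n) + (ys n - y) by rewrite addrA subrK.
  have hD := norm2D ip (a - ys n) (ys n - y).
  rewrite -eD in hD.
  have hcs := reCS ip (a - ys n) (ys n - y).
  move: hD hcs h1 h2 hA.
  set A := n2 (a - ys n); set eta := n2 (ys n - y); set rho := Re _.
  move=> hD hcs h1 h2 hA.
  have A0 : 0 <= A := norm2_ge0 ip _.
  have eta0 : 0 <= eta := norm2_ge0 ip _.
  have k1 : A * eta <= (d + 1) * eta by rewrite ler_wpM2r //; lra.
  have k2 : (d + 1) * eta <= (d + 1) * e2 by rewrite ler_wpM2l //; lra.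
  have gdef : g = n2 (a - y) - d by [].
  have k3 : rho > g / 6 by lra.
  have k4 : rho ^+ 2 > (g / 6) ^+ 2.
    nra.
  have k5 : (g / 6) ^+ 2 = g ^+ 2 / 36 by field.
  nra.
exists y; split => // m Mm.
suff : forall c, c = inner (a - y) m -> c = 0 by apply.
move=> c ec.
pose w := c *: m.
have Mw : M w by rewrite /w -[_ *: _]addr0; apply: (Mlin).
have hB : Re (inner (a - y) w) = Re c ^+ 2 + Im c ^+ 2.
  by rewrite /w innerZr // -ec; case: (c) => p q /=; lra.
have key : forall t : R, 0 <= t ^+ 2 * n2 w - 2 * t * (Re c ^+ 2 + Im c ^+ 2).
  move=> t.
  have Mt : M (t%:C *: w + y) by apply: (Mlin).
  have := hd _ Mt.
  have -> : a - (t%:C *: w + y) = (a - y) - t%:C *: w by rewrite opprD addrA addrAC.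
  rewrite norm2B // norm2Z // ReinnerZr // hB /= expr0n /= addr0.
  lra.
set W := n2 w; set B := Re c ^+ 2 + Im c ^+ 2.
have W0 : 0 <= W := norm2_ge0 ip w.
have := key (B / (W + 1)).
have : B / (W + 1) * (W + 1) = B by field; lra.
move: (B / (W + 1)) => s es hs.
have h1 : s * B = s ^+ 2 * (W + 1) by rewrite -es; ring.
have h2 : 0 <= s ^+ 2 * W by rewrite mulr_ge0 ?sqr_ge0.
have h3 : s ^+ 2 <= 0 by move: hs; rewrite -mulrA h1; lra.
have h4 : s = 0.
  by apply/eqP; rewrite -sqrf_eq0 eq_le h3 sqr_ge0.
have B0 : B = 0 by rewrite -es h4 mul0r.
have hr : Re c = 0 by move: B0; rewrite /B; nra.
have hi : Im c = 0 by move: B0; rewrite /B; nra.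
by move: hr hi; case: (c) => p q /= -> ->.
Qed.
End P.

Set Implicit Arguments. Unset Strict Implicit.


Lemma ring_id1 (F : comPzRingType) (i c x y u v : F) :
  i * (c * x + y) - i * (c * u + v) = c * (i * x - i * u) + (i * y - i * v).
Proof. ring. Qed.

Section T.
Variables (R : realType) (V : lmodType R[i]) (inner : V -> V -> R[i]).
Hypothesis ip : is_inner_product inner.
Hypothesis compl : complete inner.
Variables (T Tstar : V -> V).
Hypothesis Tlin : is_linear_op T.
Hypothesis adj : is_adjoint inner T Tstar.
Local Notation Re := complex.Re.
Local Notation Im := complex.Im.
Local Notation n2 := (norm2 inner).

Lemma TL a x y : T (a *: x + y) = a *: T x + T y.
Proof. exact: Tlin. Qed.
Lemma adjE x y : inner (T x) y = inner x (Tstar y).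
Proof. exact: adj. Qed.
Lemma conjcK' (z : R[i]) : conjc (conjc z) = z.
Proof. by case: z => a b /=; rewrite opprK. Qed.

Lemma T0 : T 0 = 0.
Proof.
have h := TL 1 0 0; rewrite scaler0 addr0 scale1r in h.
by apply: (addrI (T 0)); rewrite addr0 -h.
Qed.
Lemma TD x y : T (x + y) = T x + T y.
Proof. by rewrite -[x]scale1r TL !scale1r. Qed.
Lemma TZ c x : T (c *: x) = c *: T x.
Proof. by rewrite -[c *: x]addr0 TL T0 addr0. Qed.
Lemma TB x y : T (x - y) = T x - T y.
Proof. by rewrite TD -scaleN1r TZ scaleN1r. Qed.

Lemma inner_eq_r u v : (forall w, inner w u = inner w v) -> u = v.
Proof.
move=> h; apply/eqP; rewrite -subr_eq0; apply/eqP; apply: (ip_def ip).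
by rewrite (innerBr ip) h subrr.
Qed.
Lemma adj2 x y : inner (Tstar x) y = inner x (T y).
Proof. by rewrite (ip_sym ip) -adjE -(ip_sym ip). Qed.

Lemma TsL c x y : Tstar (c *: x + y) = c *: Tstar x + Tstar y.
Proof.
apply: inner_eq_r => w.
by rewrite -adjE (innerDr ip) (innerZr ip) (innerDr ip) (innerZr ip) -!adj.
Qed.
Lemma Ts0 : Tstar 0 = 0.
Proof.
have h := TsL 1 0 0; rewrite scaler0 addr0 scale1r in h.
by apply: (addrI (Tstar 0)); rewrite addr0 -h.
Qed.
Lemma TsD x y : Tstar (x + y) = Tstar x + Tstar y.
Proof. by rewrite -[x]scale1r TsL !scale1r. Qed.
Lemma TsZ c x : Tstar (c *: x) = c *: Tstar x.
Proof. by rewrite -[c *: x]addr0 TsL Ts0 addr0. Qed.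
Lemma TsB x y : Tstar (x - y) = Tstar x - Tstar y.
Proof. by rewrite TsD -scaleN1r TsZ scaleN1r. Qed.

Local Notation K := (defect_K T Tstar).
Local Notation Ks := (defect_Kstar T Tstar).

Lemma K0 : K 0.
Proof. by rewrite /defect_K T0 Ts0 subr0. Qed.
Lemma lin_comb (c : R[i]) (x x' y y' : V) :
  (c *: x + y) - (c *: x' + y') = c *: (x - x') + (y - y').
Proof. by rewrite scalerBr opprD addrACA. Qed.

Lemma Klin c x y : K x -> K y -> K (c *: x + y).
Proof. by rewrite /defect_K => hx hy; rewrite TL TsL lin_comb hx hy scaler0 addr0. Qed.
Lemma Ks0 : Ks 0.
Proof. by rewrite /defect_Kstar Ts0 T0 subr0. Qed.
Lemma Kslin c x y : Ks x -> Ks y -> Ks (c *: x + y).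
Proof. by rewrite /defect_Kstar => hx hy; rewrite TsL TL lin_comb hx hy scaler0 addr0. Qed.

Lemma TK x : K x -> Ks (T x).
Proof. by rewrite /defect_K /defect_Kstar => h; rewrite -TB h T0. Qed.
Lemma TsKs y : Ks y -> K (Tstar y).
Proof. by rewrite /defect_K /defect_Kstar => h; rewrite -TsB h Ts0. Qed.
Lemma KTsT x : K x -> Tstar (T x) = x.
Proof. by rewrite /defect_K => /eqP; rewrite subr_eq0 => /eqP <-. Qed.
Lemma KsTTs y : Ks y -> T (Tstar y) = y.
Proof. by rewrite /defect_Kstar => /eqP; rewrite subr_eq0 => /eqP <-. Qed.

Let S y := y - T (Tstar y).
Lemma S_sym y w : inner (S y) w = inner y (S w).
Proof.
rewrite /S (innerBl ip) (innerBr ip); congr (_ - _).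
by rewrite adjE (ip_sym ip) [inner y _](ip_sym ip) adjE.
Qed.

Lemma Ks_closed (u : nat -> V) l : (forall n, Ks (u n)) -> seq_converges_to inner u l -> Ks l.
Proof.
move=> hu hc.
have h : forall w, inner l (S w) = 0.
  move=> w; apply: (@orth_lim _ _ _ ip u l (S w) _ hc) => n.
  by rewrite -S_sym /S; move: (hu n); rewrite /defect_Kstar => ->; rewrite (inner0l ip).
rewrite /defect_Kstar; apply: (ip_def ip).
by rewrite -/(S l) S_sym h.
Qed.

Lemma Ks_proj a : exists y, Ks y /\ forall m, Ks m -> inner (a - y) m = 0.
Proof.
apply: (@projection _ _ _ ip compl); [exact: Ks0 | exact: Kslin | exact: Ks_closed].
Qed.

Lemma orth_lin (P : V -> Prop) c p q : orth inner P p -> orth inner P q -> orth inner P (c *: p + q).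
Proof. by move=> hp hq k Pk; rewrite (innerDl ip) (innerZl ip) hp // hq // mulr0 addr0. Qed.
Lemma orth0 (P : V -> Prop) : orth inner P 0.
Proof. by move=> k _; rewrite (inner0l ip). Qed.

Lemma orth_l (P : V -> Prop) p x : orth inner P p -> P x -> inner x p = 0.
Proof. by move=> hp Px; rewrite (ip_sym ip) hp //= oppr0. Qed.

Local Notation A := (A_T T Tstar).

Lemma sympl_A a : sympl_orth inner A a -> forall k, K k -> inner a.1 k = inner a.2 (T k).
Proof.
move=> sa k Kk; have := sa (k, T k) (ex_intro2 _ _ k Kk erefl).
rewrite /sympl /=; move: (inner a.1 k) (inner a.2 (T k)) => z1 z2 h.
have : 'i * (z1 - z2) = 0 by rewrite mulrBr.
move/eqP; rewrite mulf_eq0 subr_eq0 => /orP [|/eqP //].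
by rewrite eq_complex /= oner_eq0 andbF.
Qed.

Lemma sympl_lin c a b e :
  sympl inner (c *: a.1 + b.1, c *: a.2 + b.2) e = c * sympl inner a e + sympl inner b e.
Proof.
rewrite /sympl; cbn [fst snd]; rewrite !(innerDl ip) !(innerZl ip).
exact: ring_id1.
Qed.

Lemma part1 : exists Gp Gm : V * V -> V, forall a, sympl_orth inner A a ->
      [/\ orth inner K (Gp a), orth inner Ks (Gm a) &
          exists2 x0, K x0 & a = (x0 + Gp a, T x0 + Gm a)].
Proof.
have hx : forall a : V * V, exists pm : V * V, sympl_orth inner A a ->
   [/\ orth inner K pm.1, orth inner Ks pm.2 & exists2 x0, K x0 & a = (x0 + pm.1, T x0 + pm.2)].
  case=> a1 a2; have [y [Ky hy]] := Ks_proj a2.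
  exists (a1 - Tstar y, a2 - y) => sa; split => /=.
  - move=> k Kk; rewrite (innerBl ip).
    have /= -> := sympl_A sa Kk.
    rewrite -{1}(subrK y a2) (innerDl ip) (hy _ (TK Kk)) add0r adj2 subrr //.
  - by move=> m Km; apply: hy.
  - exists (Tstar y); first exact: TsKs.
    by rewrite KsTTs //; congr pair; rewrite addrC subrK.
have [f hf] := choice hx.
by exists (fun a => (f a).1), (fun a => (f a).2) => a sa; exact: hf a sa.
Qed.

Lemma part2 (Gp Gm : V * V -> V) : (forall a, sympl_orth inner A a ->
      [/\ orth inner K (Gp a), orth inner Ks (Gm a) &
          exists2 x0, K x0 & a = (x0 + Gp a, T x0 + Gm a)]) ->
  boundary_quadruple inner A (orth inner K) (orth inner Ks) Gp Gm.
Proof.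
move=> dec.
have uniq : forall a, sympl_orth inner A a -> forall x0 p m, K x0 -> orth inner K p ->
    orth inner Ks m -> a = (x0 + p, T x0 + m) -> Gp a = p /\ Gm a = m.
  move=> a sa x0 p m Kx0 hp hm e.
  have [hp' hm' [x1 Kx1 e']] := dec a sa.
  have e1 : x0 + p = x1 + Gp a by have := congr1 fst e; rewrite {1}e' /= => ->.
  have e2 : T x0 + m = T x1 + Gm a by have := congr1 snd e; rewrite {1}e' /= => ->.
  have hz : x0 - x1 = Gp a - p.
    by apply/eqP; rewrite subr_eq addrAC eq_sym subr_eq addrC e1.
  have Kz : K (x0 - x1) by rewrite -scaleN1r addrC; apply: Klin.
  have Oz : orth inner K (x0 - x1).
    by rewrite hz -scaleN1r addrC; apply: orth_lin => //.
  have z0 : x0 - x1 = 0 by apply: (ip_def ip); apply: Oz.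
  have ex : x0 = x1 by apply/eqP; rewrite -subr_eq0 z0.
  rewrite -ex in e1 e2; split; apply/esym; [exact: (addrI _ e1) | exact: (addrI _ e2)].
split.
  by move=> a sa; have [h1 h2 _] := dec a sa.
split.
- move=> c a b sa sb.
  have sab : sympl_orth inner A (c *: a.1 + b.1, c *: a.2 + b.2).
    by move=> e he; rewrite sympl_lin sa // sb // mulr0 addr0.
  have [ha1 ha2 [xa Kxa ea]] := dec a sa.
  have [hb1 hb2 [xb Kxb eb]] := dec b sb.
  have := uniq _ sab (c *: xa + xb) (c *: Gp a + Gp b) (c *: Gm a + Gm b)
    (Klin c Kxa Kxb) (orth_lin c ha1 hb1) (orth_lin c ha2 hb2).
  case.
    have ea1 : a.1 = xa + Gp a by rewrite {1}ea.
    have ea2 : a.2 = T xa + Gm a by rewrite {1}ea.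
    have eb1 : b.1 = xb + Gp b by rewrite {1}eb.
    have eb2 : b.2 = T xb + Gm b by rewrite {1}eb.
    by rewrite ea1 ea2 eb1 eb2 TL !scalerDr; congr pair; rewrite addrACA.
  by move=> -> ->.
- exists 1 => a sa; have [h1 h2 [x0 Kx0 ea]] := dec a sa.
  have ea1 : a.1 = x0 + Gp a by rewrite {1}ea.
  have ea2 : a.2 = T x0 + Gm a by rewrite {1}ea.
  rewrite /norm2_pair ea1 ea2 !(norm2D ip) (orth_l h1 Kx0) (orth_l h2 (TK Kx0)) /=.
  have := norm2_ge0 ip x0; have := norm2_ge0 ip (T x0); lra.
- move=> u v hu hv; exists (u, v).
  have sa : sympl_orth inner A (u, v).
    by move=> b [x Kx ->]; rewrite /sympl; cbn [fst snd]; rewrite (hu _ Kx) (hv _ (TK Kx)) mulr0 subrr.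
  have [-> ->] := uniq _ sa 0 u v K0 hu hv ltac:(by rewrite T0 !add0r).
  by split.
- move=> a; split.
    case=> sa [hp hm]; have [_ _ [x0 Kx0 ea]] := dec a sa.
    by exists x0 => //; rewrite {1}ea hp hm !addr0.
  case=> x Kx ->.
  have sa : sympl_orth inner A (x, T x).
    by move=> b [k Kk ->]; rewrite /sympl; cbn [fst snd]; rewrite adjE KTsT // subrr.
  have [-> ->] := uniq _ sa x 0 0 Kx ltac:(by move=> k _; rewrite (inner0l ip)) ltac:(by move=> k _; rewrite (inner0l ip)) ltac:(by rewrite !addr0).
  by [].
- move=> a b sa sb.
  have [hpa hma [xa Kxa ea]] := dec a sa.
  have [hpb hmb [xb Kxb eb]] := dec b sb.
  move: hpa hma ea hpb hmb eb; move: (Gp a) (Gm a) (Gp b) (Gm b) => pa ma pb mb.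
  move=> hpa hma -> hpb hmb ->.
  rewrite /sympl; cbn [fst snd]; rewrite !(innerDl ip) !(innerDr ip) (orth_l hpb Kxa) (hpa _ Kxb) adjE KTsT //.
  rewrite (orth_l hmb (TK Kxa)) (hma _ (TK Kxb)) !addr0 !add0r.
  ring.
Qed.

End T.

Unset Implicit Arguments.

Theorem lemma4p3 (R : realType) (V : lmodType R[i]) (inner : V -> V -> R[i])
    (T Tstar : V -> V) :
  is_inf_dim_sep_hilbert inner ->
  cnu_contraction inner T ->
  is_adjoint inner T Tstar ->
  let K := defect_K T Tstar in
  let Kstar := defect_Kstar T Tstar in
  let A := A_T T Tstar in
  let decomp (Gp Gm : V * V -> V) :=
    forall a, sympl_orth inner A a ->
      [/\ orth inner K (Gp a), orth inner Kstar (Gm a) &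
          exists2 x0, K x0 & a = (x0 + Gp a, T x0 + Gm a)] in
  (exists Gp Gm, decomp Gp Gm) /\
  (forall Gp Gm, decomp Gp Gm ->
     boundary_quadruple inner A (orth inner K) (orth inner Kstar) Gp Gm).
Proof.
move=> [ip compl _ _] [[Tlin _] _] adj K Kstar A decomp.
split.
  exact: (part1 ip compl Tlin adj).
move=> Gp Gm hd.
exact: (part2 ip Tlin adj hd).
Qed.
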